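(* Let $G$ be a finite simple graph, $s\geq1$, and $e_1,\dots,e_s$ edges of $G$ (repetitions allowed). Every minimal monomial generator of $(I(G)^{s+1}:e_1\cdots e_s)$ is of the form $uv$ for vertices $u,v$ (possibly $u=v$) such that either $uv$ is an edge of $G$ or $u$ and $v$ are even-connected with respect to $e_1\cdots e_s$.
   Context: $S=K[\,x : x\in V(G)\,]$, $I(G)=(xy : xy\text{ an edge of } G)$, edges identified with degree-2 monomials, $(J:m)=\{f\in S : fm\in J\}$. Even-connection: vertices $u,v$ (possibly equal) are even-connected with respect to $e_1,\dots,e_s$ if there is a sequence of vertices $p_0,\dots,p_{2k+1}$, $k\ge1$ (vertices may repeat), with (1) $p_0=u$, $p_{2k+1}=v$; (2) for all $0\le l\le k-1$, $p_{2l+1}p_{2l+2}=e_i$ for some $i$; (3) for every $i$, $|\{l\ge0: p_{2l+1}p_{2l+2}=e_i\}|\le|\{j: e_j=e_i\}|$; (4) for all $0\le r\le 2k$, $p_rp_{r+1}$ is an edge of $G$. *)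

(* Defs.v *)
From mathcomp Require Import all_boot all_order all_algebra.
From mathcomp Require Import mpoly.
Set Implicit Arguments. Unset Strict Implicit. Unset Printing Implicit Defensive.
Import GRing.Theory.
Local Open Scope ring_scope.

Definition gen_ideal (R : comRingType) (A : R -> Prop) : R -> Prop :=
  fun f => exists (m : nat) (c g : 'I_m -> R),
    (forall i, A (g i)) /\ f = \sum_(i < m) c i * g i.

Definition ideal_pow (R : comRingType) (I : R -> Prop) (k : nat) : R -> Prop :=
  gen_ideal (fun f => exists g : 'I_k -> R, (forall i, I (g i)) /\
                                           f = \prod_(i < k) g i).

Definition colon (R : comRingType) (J : R -> Prop) (m : R) : R -> Prop :=
  fun f => J (f * m).

Definition simple_graph (n : nat) (G : rel 'I_n) : Prop :=
  (forall x y, G x y = G y x) /\ (forall x, ~~ G x x).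

Definition edge_ideal (K : fieldType) (n : nat) (G : rel 'I_n)
  : {mpoly K[n]} -> Prop :=
  gen_ideal (fun f => exists a b : 'I_n, G a b /\ f = 'X_a * 'X_b).

Definition min_mon_gen (K : fieldType) (n : nat) (J : {mpoly K[n]} -> Prop)
  (m : 'X_{1..n}) : Prop :=
  J 'X_[m] /\ forall m' : 'X_{1..n}, (m' <= m)%MM -> m' != m -> ~ J 'X_[m'].

Definition edge_eq (n : nat) (x y : 'I_n * 'I_n) : bool :=
  ((x.1 == y.1) && (x.2 == y.2)) || ((x.1 == y.2) && (x.2 == y.1)).

Definition even_connected (n s : nat) (G : rel 'I_n) (e : 'I_s -> 'I_n * 'I_n)
  (u v : 'I_n) : Prop :=
  exists (k : nat) (p : nat -> 'I_n),
    [/\ (1 <= k)%N,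
        p 0%N = u /\ p (2 * k + 1)%N = v,
        (forall l, (l < k)%N -> exists i, edge_eq (p (2 * l + 1)%N, p (2 * l + 2)%N) (e i)),
        (forall i, (#|[set l : 'I_k | edge_eq (p (2 * l + 1)%N, p (2 * l + 2)%N) (e i)]|
                    <= #|[set j | edge_eq (e j) (e i)]|)%N) &
        (forall r, (r <= 2 * k)%N -> G (p r) (p r.+1))].

(* Main.v *)
Require Import Defs.
From mathcomp Require Import all_boot all_order all_algebra.
From mathcomp Require Import mpoly.
From mathcomp Require Import zify.
Set Implicit Arguments. Unset Strict Implicit. Unset Printing Implicit Defensive.
Import GRing.Theory.
Section Comb.
Variables (n s : nat) (G : rel 'I_n) (e : 'I_s -> 'I_n * 'I_n).
Hypothesis Gsym : forall x y, G x y = G y x.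
Hypothesis eG : forall i, G (e i).1 (e i).2.

Definition pc (f : 'I_n * 'I_n) (x : 'I_n) : nat := (f.1 == x) + (f.2 == x).

Lemma edge_eq_refl (f : 'I_n * 'I_n) : edge_eq f f.
Proof. by case: f => a b; rewrite /edge_eq /= !eqxx. Qed.

Lemma edge_eq_swap (a b : 'I_n) g : edge_eq (a, b) g -> edge_eq (b, a) g.
Proof.
case: g => g1 g2; rewrite /edge_eq /=.
by case/orP => /andP [/eqP -> /eqP ->]; rewrite !eqxx ?orbT.
Qed.

Lemma edge_eq_trans (a b c : 'I_n * 'I_n) : edge_eq a b -> edge_eq a c -> edge_eq b c.
Proof.
case: a => a1 a2; case: b => b1 b2; case: c => c1 c2; rewrite /edge_eq /=.
by case/orP => /andP [/eqP -> /eqP ->]; case/orP => /andP [/eqP -> /eqP ->];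
  rewrite !eqxx ?orbT.
Qed.

Lemma pc_eq (f g : 'I_n * 'I_n) x : edge_eq f g -> pc f x = pc g x.
Proof.
case: f => a1 a2; case: g => b1 b2; rewrite /edge_eq /pc /=.
by case/orP => /andP [/eqP -> /eqP ->] //; apply: addnC.
Qed.

Lemma edge_eq_G a b i : edge_eq (a, b) (e i) -> G a b.
Proof.
have := eG i; case: (e i) => b1 b2 /= Gb; rewrite /edge_eq /=.
by case/orP => /andP [/eqP -> /eqP ->] //; rewrite Gsym.
Qed.

Inductive walk : 'I_n -> 'I_n -> seq 'I_s -> seq ('I_n * 'I_n) -> Prop :=
| wsingle u v : G u v -> walk u v [::] [:: (u, v)]
| wstep u a b v i rs bl : G u a -> edge_eq (a, b) (e i) -> walk b v rs bl ->
    walk u v (i :: rs) ((u, a) :: bl).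

Definition gedges (F : seq ('I_n * 'I_n)) := forall f, f \in F -> G f.1 f.2.

Lemma walk_G u v rs bl : walk u v rs bl -> gedges bl.
Proof.
elim => [u' v' Guv | u' a b v' i rs' bl' Gua _ _ IH] f.
  by rewrite inE => /eqP ->.
by rewrite inE => /orP [/eqP -> //|/IH].
Qed.

Lemma walk_size u v rs bl : walk u v rs bl -> size bl = (size rs).+1.
Proof. by elim => //= *; congr S. Qed.

Lemma walk_pc u v rs bl : walk u v rs bl -> forall x,
  (\sum_(f <- bl) pc f x = pc (u, v) x + \sum_(j <- rs) pc (e j) x)%N.
Proof.
elim => [u' v' _ | u' a b v' i rs' bl' _ Hab _ IH] x.
  by rewrite big_seq1 big_nil addn0.
rewrite !big_cons IH -(pc_eq x Hab) /pc /=; lia.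
Qed.

Lemma walk_cat u x rs1 bl1 y v i rs2 bl2 : walk u x rs1 bl1 ->
  edge_eq (x, y) (e i) -> walk y v rs2 bl2 ->
  walk u v (rs1 ++ i :: rs2) (bl1 ++ bl2).
Proof.
move=> H; elim: H y v i rs2 bl2 => [u' x' Gux | u' a b x' j rs' bl' Gua Hab _ IH]
  y v i rs2 bl2 Hxy H2 /=.
  exact: wstep Gux Hxy H2.
by apply: (wstep Gua Hab); apply: IH Hxy H2.
Qed.

Definition swp (f : 'I_n * 'I_n) := (f.2, f.1).

Lemma walk_rev u v rs bl : walk u v rs bl -> walk v u (rev rs) (rev (map swp bl)).
Proof.
elim => [u' v' Guv | u' a b v' i rs' bl' Gua Hab _ IH].
  by apply: wsingle; rewrite Gsym.
rewrite rev_cons map_cons rev_cons -!cats1.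
apply: (walk_cat IH (edge_eq_swap Hab)).
by apply: wsingle; rewrite Gsym.
Qed.

Definition verts (bl : seq ('I_n * 'I_n)) := flatten [seq [:: f.1; f.2] | f <- bl].

Lemma walk_nth u v rs bl (H : walk u v rs bl) x0 i0 :
  let vs := verts bl in
  [/\ nth x0 vs 0 = u, nth x0 vs (size rs).*2.+1 = v,
   forall l, l < size rs -> edge_eq (nth x0 vs l.*2.+1, nth x0 vs l.*2.+2) (e (nth i0 rs l)) &
   forall r, r <= (size rs).*2 -> G (nth x0 vs r) (nth x0 vs r.+1)].
Proof.
elim: H => [u' v' Guv | u' a b v' i rs' bl' Gua Hab Hw [IH1 IH2 IH3 IH4]].
  by split => //; case.
have vE : verts ((u', a) :: bl') = u' :: a :: verts bl' by [].
rewrite vE; split => //.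
- case=> [|l]; first by rewrite /= IH1.
  by rewrite /= ltnS ?doubleS => /IH3.
- case=> [|[|r]]; first by [].
  + by move=> _ /=; rewrite IH1; exact: edge_eq_G Hab.
  + by rewrite /= ?doubleS ?ltnS => /IH4.
Qed.


Lemma walk_ec u v rs bl : walk u v rs bl -> rs != [::] -> uniq rs ->
  even_connected G e u v.
Proof.
case: rs => [//|i0 rs'] H _ Hu; set rs := i0 :: rs' in H Hu *.
have [H1 H2 H3 H4] := walk_nth H u i0.
exists (size rs), (fun r => nth u (verts bl) r); split => //.
- by rewrite mul2n addn1.
- move=> l Hl; exists (nth i0 rs l).
  by rewrite mul2n addn1 addn2; apply: H3.
- move=> i.
  pose f := fun l : 'I_(size rs) => nth i0 rs l.
  have finj : injective f.
    by move=> a b /eqP; rewrite /f nth_uniq // => /eqP /val_inj.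
  rewrite -(card_imset _ finj); apply: subset_leq_card; apply/subsetP => j.
  case/imsetP => l; rewrite inE => Hl ->; rewrite inE.
  apply: edge_eq_trans Hl; rewrite mul2n addn1 addn2; exact: H3.
- by move=> r; rewrite mul2n => /H4.
Qed.

Hypothesis Girr : forall x, ~~ G x x.
Variable m : 'I_n -> nat.

Local Notation W := ('I_n * 'I_n * seq 'I_s * seq ('I_n * 'I_n))%type.
Definition validW (w : W) := walk w.1.1.1 w.1.1.2 w.1.2 w.2.

Definition Inv (Ws : seq W) (R : seq 'I_s) :=
 [/\ forall w, w \in Ws -> validW w,
     forall j, count_mem j R + \sum_(w <- Ws) count_mem j w.1.2 <= 1,
     size Ws = (size R).+1 &
     forall x, \sum_(w <- Ws) pc w.1.1 x <= m x + \sum_(j <- R) pc (e j) x].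

Lemma sum_pos (T : eqType) (r : seq T) (F : T -> nat) :
  0 < \sum_(x <- r) F x -> exists2 x, x \in r & 0 < F x.
Proof.
elim: r => [|a r IH]; first by rewrite big_nil.
rewrite big_cons; case: (posnP (F a)) => [->|Fa] /=.
  by case/IH => x xr Fx; exists x => //; rewrite inE xr orbT.
by move=> _; exists a => //; rewrite mem_head.
Qed.

Lemma sum_rem (T : eqType) (r : seq T) x (F : T -> nat) : x \in r ->
  \sum_(y <- r) F y = F x + \sum_(y <- rem x r) F y.
Proof. by move=> H; rewrite (perm_big _ (perm_to_rem H)) big_cons. Qed.

Lemma uniq_count1 (T : eqType) (r : seq T) :
  (forall j, count_mem j r <= 1) -> uniq r.
Proof.
elim: r => [//|a r IH] H /=; apply/andP; split.
  have := H a; rewrite /= eqxx add1n ltnS leqn0 => /eqP.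
  by move/count_memPn.
by apply: IH => j; apply: leq_trans (H j); rewrite /= leq_addl.
Qed.

Lemma sumW_rem (r : seq W) x (F : W -> nat) : x \in r ->
  \sum_(y <- r) F y = F x + \sum_(y <- rem x r) F y.
Proof. exact: sum_rem. Qed.

Lemma Lrem (Ws : seq W) i R (w0 : W) : Inv Ws (i :: R) -> w0 \in Ws ->
  (forall z, (z == (e i).1) || (z == (e i).2) ->
     \sum_(w <- Ws) pc w.1.1 z <= m z + \sum_(j <- R) pc (e j) z + pc w0.1.1 z) ->
  Inv (rem w0 Ws) R.
Proof.
move=> [I1 I2 I3 I4] Hw0 Hz; split.
- by move=> w /mem_rem /I1.
- move=> j; have := I2 j.
  rewrite (sumW_rem (fun w : W => count_mem j w.1.2) Hw0) /=.
  lia.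
- by rewrite size_rem // I3.
- move=> z; rewrite -(leq_add2l (pc w0.1.1 z)) -(sumW_rem (fun w : W => pc w.1.1 z) Hw0).
  have := I4 z; rewrite big_cons.
  case: (boolP ((z == (e i).1) || (z == (e i).2))) => Hzz.
    by have := Hz z Hzz; lia.
  have -> : pc (e i) z = 0.
    by move: Hzz; rewrite /pc negb_or => /andP [/negPf a /negPf b];
      rewrite eq_sym a eq_sym b.
  lia.
Qed.

Lemma Lmerge (Ws : seq W) i R (w1 w2 w3 : W) : Inv Ws (i :: R) -> w1 \in Ws ->
  w2 \in rem w1 Ws -> validW w3 ->
  (forall z, pc w3.1.1 z + pc (e i) z = pc w1.1.1 z + pc w2.1.1 z) ->
  (forall j, count_mem j w3.1.2 = count_mem j w1.1.2 + count_mem j w2.1.2 + (j == i)) ->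
  Inv (w3 :: rem w2 (rem w1 Ws)) R.
Proof.
move=> [I1 I2 I3 I4] H1 H2 V3 P3 C3; split.
- move=> w; rewrite inE => /orP [/eqP -> //|/mem_rem /mem_rem]; exact: I1.
- move=> j; have := I2 j.
  rewrite (sumW_rem (fun w : W => count_mem j w.1.2) H1)
    (sumW_rem (fun w : W => count_mem j w.1.2) H2) /= big_cons C3 /= eq_sym; lia.
- by rewrite /= size_rem // size_rem // I3.
- move=> z; have := I4 z.
  rewrite (sumW_rem (fun w : W => pc w.1.1 z) H1)
    (sumW_rem (fun w : W => pc w.1.1 z) H2) /= !big_cons.
  have := P3 z; lia.
Qed.

Lemma ori_end (w : W) x : validW w -> 0 < pc w.1.1 x ->
  exists a rs bl, [/\ walk a x rs bl, forall z, pc (a, x) z = pc w.1.1 z &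
     forall j, count_mem j rs = count_mem j w.1.2].
Proof.
case: w => [[[u v] rs] bl]; rewrite /validW /= => Hw.
case: (eqVneq v x) => [<-|vx] Hp; first by exists u, rs, bl.
have ux : u = x by apply/eqP; move: Hp; rewrite /pc /= (negPf vx) addn0 lt0b.
exists v, (rev rs), (rev (map swp bl)); split.
- by rewrite -ux; apply: walk_rev.
- by move=> z; rewrite /pc /= ux addnC.
- by move=> j; rewrite count_rev.
Qed.

Lemma ori_start (w : W) y : validW w -> 0 < pc w.1.1 y ->
  exists b rs bl, [/\ walk y b rs bl, forall z, pc (y, b) z = pc w.1.1 z &
     forall j, count_mem j rs = count_mem j w.1.2].
Proof.
move=> Hw Hp; have [a [rs [bl [H1 H2 H3]]]] := ori_end Hw Hp.
exists a, (rev rs), (rev (map swp bl)); split.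
- exact: walk_rev.
- by move=> z; rewrite -H2 /pc /= addnC.
- by move=> j; rewrite count_rev.
Qed.

Lemma main_ind R (Ws : seq W) : Inv Ws R ->
  exists u v rs bl, [/\ walk u v rs bl, uniq rs & forall x, pc (u, v) x <= m x].
Proof.
elim: R Ws => [|i R IH] Ws.
  case: Ws => [|w [|w' Ws]] [I1 I2 I3 I4]; [by [] | | by move: I3 => /= /eqP; rewrite !eqSS].
  clear I3; move: I1 I2 I4; case: w => [[[u v] rs] bl] I1 I2 I4.
  exists u, v, rs, bl; split.
  - exact: (I1 _ (mem_head _ _)).
  - by apply: uniq_count1 => j; have := I2 j; rewrite big_seq1.
  - by move=> x; have := I4 x; rewrite big_seq1 big_nil addn0.
move=> Hinv; have [I1 I2 I3 I4] := Hinv.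
set x := (e i).1; set y := (e i).2.
have eiE : e i = (x, y) by rewrite /x /y; case: (e i).
have xy : x != y.
  by apply/eqP => exy; have := eG i; rewrite -/x -/y exy (negPf (Girr y)).
have pex : pc (e i) x = 1 by rewrite eiE /pc /= eqxx eq_sym (negPf xy).
have pey : pc (e i) y = 1 by rewrite eiE /pc /= eqxx (negPf xy).
set B := fun z => \sum_(w <- Ws) pc w.1.1 z.
set C := fun z => m z + \sum_(j <- R) pc (e j) z.
have I4' : forall z, B z <= C z + pc (e i) z.
  by move=> z; have := I4 z; rewrite big_cons /B /C; lia.
have xyE : forall z, (z == x) || (z == y) -> pc (e i) z = 1.
  by move=> z /orP [/eqP ->|/eqP ->].
case: (leqP (B x) (C x)) => nx.
  case: (leqP (B y) (C y)) => ny.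
    have [w0 Hw0] : exists w0, w0 \in Ws.
      by move: (I3); case: (Ws) => [//|w0 Ws0] _; exists w0; exact: mem_head.
    apply: (IH (rem w0 Ws)); apply: Lrem Hinv Hw0 _.
    move=> z /orP [/eqP ->|/eqP ->]; rewrite -/x -/y.
      by apply: leq_trans nx _; rewrite /C leq_addr.
    by apply: leq_trans ny _; rewrite /C leq_addr.
  have [w2 Hw2 Pw2] := sum_pos (leq_ltn_trans (leq0n _) ny).
  apply: (IH (rem w2 Ws)); apply: Lrem Hinv Hw2 _.
  move=> z /orP [/eqP ->|/eqP ->]; rewrite -/x -/y.
    by apply: leq_trans nx _; rewrite /C leq_addr.
  by have := I4' y; rewrite pey -/(C y) => H; apply: leq_trans H _; rewrite leq_add2l.
have [w1 Hw1 Pw1] := sum_pos (leq_ltn_trans (leq0n _) nx).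
have remok : (B y <= C y) || (0 < pc w1.1.1 y) -> exists u v rs bl,
    [/\ walk u v rs bl, uniq rs & forall x, pc (u, v) x <= m x].
  move=> Hy; apply: (IH (rem w1 Ws)); apply: Lrem Hinv Hw1 _.
  move=> z /orP [/eqP ->|/eqP ->]; rewrite -/x -/y.
    by have := I4' x; rewrite pex -/(C x) => H; apply: leq_trans H _; rewrite leq_add2l.
  case/orP: Hy => Hy; first by apply: leq_trans Hy _; rewrite /C leq_addr.
  by have := I4' y; rewrite pey -/(C y) => H; apply: leq_trans H _; rewrite leq_add2l.
case: (leqP (B y) (C y)) => ny; first by apply: remok; rewrite ny.
case: (posnP (pc w1.1.1 y)) => Py; last by apply: remok; rewrite Py orbT.
have : 0 < \sum_(w <- rem w1 Ws) pc w.1.1 y.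
  by have := ny; rewrite /B (sumW_rem _ Hw1) Py add0n; apply: leq_ltn_trans.
case/sum_pos => w2 Hw2 Pw2.
have [a [rs1 [bl1 [W1 P1 C1]]]] := ori_end (I1 _ Hw1) Pw1.
have [b [rs2 [bl2 [W2 P2 C2]]]] := ori_start (I1 _ (mem_rem Hw2)) Pw2.
apply: (IH ((a, b, rs1 ++ i :: rs2, bl1 ++ bl2) :: rem w2 (rem w1 Ws))).
apply: Lmerge Hinv Hw1 Hw2 _ _ _.
- rewrite /validW /=; apply: walk_cat W1 _ W2; rewrite eiE; exact: edge_eq_refl.
- move=> z /=; rewrite -P1 -P2 eiE /pc /=; lia.
- by move=> j /=; rewrite count_cat /= -C1 -C2 eq_sym addnA [RHS]addnAC.
Qed.

End Comb.

Local Open Scope ring_scope.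

Section Alg.
Variables (K : fieldType) (n : nat) (G : rel 'I_n).

Definition pm (f : 'I_n * 'I_n) : 'X_{1..n} := (U_(f.1) + U_(f.2))%MM.
Definition msF (F : seq ('I_n * 'I_n)) : 'X_{1..n} := \big[+%MM/0%MM]_(f <- F) pm f.

Lemma XmsF F : 'X_[msF F] = \prod_(f <- F) ('X_f.1 * 'X_f.2) :> {mpoly K[n]}.
Proof.
rewrite /msF; elim: F => [|f F IH]; first by rewrite !big_nil mpolyX0.
by rewrite !big_cons mpolyXD IH /pm mpolyXD.
Qed.

Definition edges (F : seq ('I_n * 'I_n)) := forall f, f \in F -> G f.1 f.2.

Definition Pk (k : nat) (p : {mpoly K[n]}) := forall mm, mm \in msupp p ->
  exists F, [/\ size F = k, edges F & (msF F <= mm)%MM].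

Lemma Pk0 k : Pk k 0.
Proof. by move=> mm; rewrite msupp0. Qed.

Lemma PkD k p q : Pk k p -> Pk k q -> Pk k (p + q).
Proof.
move=> Hp Hq mm /msuppD_le; rewrite mem_cat => /orP[/Hp|/Hq] //.
Qed.

Lemma Pk_mul a b p q : Pk a p -> Pk b q -> Pk (a + b) (p * q).
Proof.
move=> Hp Hq mm /msuppM_le /allpairsP [[m1 m2] /= [/Hp [F1 [s1 e1 l1]] /Hq [F2 [s2 e2 l2]] ->]].
exists (F1 ++ F2); split.
- by rewrite size_cat s1 s2.
- by move=> f; rewrite mem_cat => /orP[/e1|/e2].
- rewrite /msF big_cat /=; apply/mnm_lepP => i; rewrite !mnmDE.
  by apply: leq_add; apply/mnm_lepP.
Qed.

Lemma Pk_mull k c q : Pk k q -> Pk k (c * q).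
Proof.
move=> Hq mm /msuppM_le /allpairsP [[m1 m2] /= [_ /Hq [F [s1 e1 l1]] ->]].
exists F; split => //; apply: lepm_trans l1 _; exact: lem_addl.
Qed.

Lemma Pk_sum k m (c g : 'I_m -> {mpoly K[n]}) :
  (forall i, Pk k (g i)) -> Pk k (\sum_(i < m) c i * g i).
Proof.
move=> H; apply: (big_ind (Pk k)); [exact: Pk0 | exact: PkD | ].
by move=> i _; apply: Pk_mull.
Qed.

Lemma P1_edge p : @edge_ideal K n G p -> Pk 1 p.
Proof.
case=> m [c [g [Hg ->]]]; apply: Pk_sum => i mm.
case: (Hg i) => a [b [Gab ->]].
rewrite -mpolyXD msuppX inE => /eqP ->.
exists [:: (a, b)]; split => //.
  by move=> f; rewrite inE => /eqP -> /=.
by rewrite /msF big_seq1 lepm_refl.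
Qed.

Lemma P_pow k p : ideal_pow (@edge_ideal K n G) k p -> Pk k p.
Proof.
case=> m [c [g [Hg ->]]]; apply: Pk_sum => i.
case: (Hg i) => h [Hh ->].
elim: k h Hh {Hg g} => [|k IH] h Hh.
  rewrite big_ord0 => mm; rewrite -mpolyX0 msuppX inE => /eqP ->.
  by exists [::]; split => //; rewrite /msF big_nil lepm_refl.
rewrite big_ord_recr /=; rewrite -[X in Pk X _]addn1.
apply: Pk_mul; first by apply: IH => j; apply: Hh.
exact: P1_edge.
Qed.

Lemma edge_in a b : G a b -> @edge_ideal K n G ('X_a * 'X_b).
Proof.
move=> Gab; exists 1%N, (fun _ => 1), (fun _ => 'X_a * 'X_b); split.
  by move=> _; exists a, b.
by rewrite big_ord1 mul1r.
Qed.

Lemma prodF_gen F : edges F -> exists g : 'I_(size F) -> {mpoly K[n]},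
  (forall i, @edge_ideal K n G (g i)) /\ \prod_(f <- F) ('X_f.1 * 'X_f.2) = \prod_i g i.
Proof.
elim: F => [|f F IH] eF.
  by exists (fun _ => 1); split => [[]//|]; rewrite big_nil big_ord0.
have [|g [Hg Hp]] := IH.
  by move=> x xF; apply: eF; rewrite inE xF orbT.
exists (fun i : 'I_(size F).+1 => if unlift ord0 i is Some j then g j else 'X_f.1 * 'X_f.2).
split.
  move=> i; case: (unlift ord0 i) => [j|]; first exact: Hg.
  by apply: edge_in; apply: eF; rewrite mem_head.
rewrite big_cons big_ord_recl unlift_none Hp; congr (_ * _).
by apply: eq_bigr => i _; rewrite liftK.
Qed.

Lemma pow_of_F F (mm : 'X_{1..n}) : edges F -> (msF F <= mm)%MM ->
  ideal_pow (@edge_ideal K n G) (size F) 'X_[mm].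
Proof.
move=> eF le; exists 1%N, (fun _ => 'X_[(mm - msF F)%MM]),
   (fun _ => \prod_(f <- F) ('X_f.1 * 'X_f.2)); split.
  by move=> _; have [g [Hg Hp]] := prodF_gen eF; exists g.
by rewrite big_ord1 -XmsF -mpolyXD submK.
Qed.

End Alg.

Lemma sum_enum s (F : 'I_s -> nat) : (\sum_(j <- enum 'I_s) F j = \sum_(j < s) F j)%N.
Proof. by rewrite big_enum. Qed.

Lemma msF_pt n (F : seq ('I_n * 'I_n)) x : msF F x = (\sum_(f <- F) pc f x)%N.
Proof.
rewrite /msF mnm_sumE; apply: eq_bigr => f _.
by rewrite /pm mnmDE !mnm1E.
Qed.

Theorem theorem6p7 (K : fieldType) (n : nat) (G : rel 'I_n) (s : nat)
  (e : 'I_s -> 'I_n * 'I_n) :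
  simple_graph G ->
  (1 <= s)%N ->
  (forall i, G (e i).1 (e i).2) ->
  forall m : 'X_{1..n},
    min_mon_gen (colon (ideal_pow (@edge_ideal K n G) s.+1)
                       (\prod_(i < s) ('X_(e i).1 * 'X_(e i).2))) m ->
    exists u v : 'I_n,
      'X_[m] = 'X_u * 'X_v :> {mpoly K[n]} /\
      (G u v \/ even_connected G e u v).
Proof.
move=> [Gsym Girr] hs eG m [Hm Hmin].
set E := map e (enum 'I_s).
have hP : \prod_(i < s) ('X_(e i).1 * 'X_(e i).2) = 'X_[msF E] :> {mpoly K[n]}.
  by rewrite XmsF /E big_map big_enum.
have mEpt : forall x, msF E x = (\sum_(j <- enum 'I_s) pc (e j) x)%N.
  by move=> x; rewrite msF_pt /E big_map.
move: Hm; rewrite /colon hP -mpolyXD => /P_pow /(_ (m + msF E)%MM); rewrite msuppX mem_head => /(_ isT) [F [sF eF leF]].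
have Hinv : Inv G e (fun x => m x)
   [seq (f, [::] : seq 'I_s, [:: f]) | f <- F] (enum 'I_s).
  split.
  - move=> w /mapP [f fF ->]; rewrite /validW /=.
    by case: f fF => a b fF; apply: wsingle; apply: (eF _ fF).
  - move=> j; rewrite big_map big1 // addn0.
    by rewrite (count_uniq_mem _ (enum_uniq _)) mem_enum.
  - by rewrite size_map sF size_enum_ord.
  - move=> x; rewrite big_map /= -mEpt -msF_pt -mnmDE.
    by move/mnm_lepP: leF.
have [u [v [rs [bl [Hw Hu Hle]]]]] := main_ind Gsym eG Girr Hinv.
set mm := pm (u, v).
have mmle : (mm <= m)%MM.
  by apply/mnm_lepP => x; rewrite /mm /pm mnmDE !mnm1E; apply: Hle.
set Fr := [seq j <- enum 'I_s | j \notin rs].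
have Hperm : perm_eq (rs ++ Fr) (enum 'I_s).
  apply: uniq_perm.
  - rewrite cat_uniq Hu filter_uniq ?enum_uniq // andbT /=.
    by apply/hasPn => j; rewrite mem_filter => /andP [].
  - exact: enum_uniq.
  - by move=> j; rewrite mem_cat mem_filter mem_enum; case: (j \in rs).
have sz : (size rs + size Fr)%N = s.
  by rewrite -size_cat (perm_size Hperm) size_enum_ord.
have Jmm : colon (ideal_pow (@edge_ideal K n G) s.+1)
                 (\prod_(i < s) ('X_(e i).1 * 'X_(e i).2)) 'X_[mm].
  rewrite /colon hP -mpolyXD.
  have -> : s.+1 = size (bl ++ map e Fr).
    by rewrite size_cat size_map (walk_size Hw) addSn sz.
  apply: pow_of_F.
  - move=> f; rewrite mem_cat => /orP [/(walk_G Hw) //|/mapP [j _ ->]].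
    exact: eG.
  - apply/mnm_lepP => x; rewrite msF_pt mnmDE mEpt big_cat /= big_map.
    rewrite (walk_pc Hw) -(perm_big _ Hperm) big_cat /= /mm /pm mnmDE !mnm1E.
    by rewrite /pc /= addnA.
have mmE : mm = m.
  apply/eqP; apply/negPn/negP => neq.
  exact: (Hmin mm mmle neq Jmm).
exists u, v; split.
  by rewrite -mmE /mm /pm mpolyXD.
case: rs Hw Hu {Hle Fr Hperm sz Jmm} => [|i rs] Hw Hu.
  by left; inversion Hw.
by right; apply: (walk_ec Gsym eG Hw).
Qed.
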